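(* Let $k\in\mathbb{N}$ and let $H=\sum_P\alpha_PP$ be an $n$-qubit Hamiltonian with $\|H\|_\infty\le1$ and $\mathrm{tr}(H)=0$, and let $A=\Pi_D(I^{\otimes n}\otimes H)\Pi_D$ and $H_{>k}=\sum_{|P|>k}\alpha_PP$. Then for every integer $\ell\ge2$, \[ |\langle\sigma_{I^{\otimes n}}|A^\ell|\sigma_{I^{\otimes n}}\rangle| \le \langle\sigma_{I^{\otimes n}}|A^2|\sigma_{I^{\otimes n}}\rangle = \|H_{>k}\|_2^2. \]
   Context: The $n$-qubit Paulis are $\{I,X,Y,Z\}^{\otimes n}$ with weight $|P|$ the number of non-identity factors; every Hamiltonian is uniquely $H=\sum_P\alpha_PP$ with real $\alpha_P$. $|\sigma_{I^{\otimes n}}\rangle=2^{-n/2}\sum_{x}|x\rangle\otimes|x\rangle$ and $|\sigma_P\rangle=(I^{\otimes n}\otimes P)|\sigma_{I^{\otimes n}}\rangle$. $D$ is the span of $|\sigma_P\rangle$ for $P=I^{\otimes n}$ or $|P|>k$; $\Pi_D$ is its projector. $\|M\|_2=\sqrt{\mathrm{tr}(M^\dagger M)/2^n}$ is the normalized Frobenius norm and $\|\cdot\|_\infty$ the spectral norm. *)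

(* Defs.v *)
(* n-qubit operators are 2^n x 2^n matrices over a
   numClosedFieldType C (e.g. algC, or complex numbers R[i]). *)
From HB Require Import structures.
From mathcomp Require Import all_boot all_order all_algebra.
From mathcomp.real_closed Require Export mxtens.
Set Implicit Arguments. Unset Strict Implicit. Unset Printing Implicit Defensive.
Import Order.TTheory GRing.Theory Num.Theory.
Local Open Scope ring_scope.

Section Qubits.
Variable C : numClosedFieldType.

Definition adj {m p : nat} (M : 'M[C]_(m, p)) : 'M[C]_(p, m) :=
  (map_mx Num.conj M)^T.

(* single-qubit Paulis: 0 = I, 1 = X, 2 = Y, 3 = Z; entry (row b, column c) *)
Definition pauli1 (a : 'I_4) (b c : bool) : C :=
  match val a with
  | 0 => (b == c)%:R
  | 1 => (b != c)%:R
  | 2 => if b == c then 0 else if b then 'i else - 'i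
  | _ => if b == c then (if b then -1 else 1) else 0
  end.

Definition bit {N : nat} (x : 'I_N) (q : nat) : bool := odd (x %/ 2 ^ q).

Definition pstring (n : nat) := {ffun 'I_n -> 'I_4}.

Definition pauli {n : nat} (P : pstring n) : 'M[C]_(2 ^ n) :=
  \matrix_(x, y) \prod_(q < n) pauli1 (P q) (bit x q) (bit y q).

Definition weight {n : nat} (P : pstring n) : nat := #|[set q | P q != 0]|.

Definition pid (n : nat) : pstring n := [ffun => 0].

Definition sigmaI (n : nat) : 'cV[C]_(2 ^ n * 2 ^ n) :=
  (sqrtC (2 ^ n)%:R)^-1 *:
    \sum_(x < 2 ^ n) (delta_mx x (0 : 'I_1) *t delta_mx x (0 : 'I_1)).

Definition sigmaP {n : nat} (P : pstring n) : 'cV[C]_(2 ^ n * 2 ^ n) :=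
  (1%:M *t pauli P) *m sigmaI n.

Definition inD (n k : nat) (P : pstring n) : bool :=
  (P == pid n) || (k < weight P)%N.

(* Pi is the (orthogonal) projector onto D = span{ |sigma_P> : inD P }:
   Hermitian, idempotent, with column space equal to D *)
Definition Dspan (n k : nat) : 'M[C]_(2 ^ n * 2 ^ n) :=
  (\sum_(P : pstring n | inD k P) <<trmx (sigmaP P)>>)%MS.

Definition is_proj_D (n k : nat) (Pi : 'M[C]_(2 ^ n * 2 ^ n)) : Prop :=
  [/\ adj Pi = Pi, Pi *m Pi = Pi &
      (trmx Pi == Dspan n k)%MS].

(* matrix powers (square matrices of non-successor dimension) *)
Fixpoint mxpow {m : nat} (A : 'M[C]_m) (l : nat) : 'M[C]_m :=
  if l is l'.+1 then A *m mxpow A l' else 1%:M.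

Definition vnorm2 {m : nat} (v : 'cV[C]_m) : C := (adj v *m v) 0 0.

Definition specnorm_le1 {m : nat} (M : 'M[C]_m) : Prop :=
  forall v : 'cV[C]_m, vnorm2 (M *m v) <= vnorm2 v.

Definition norm2 {n : nat} (M : 'M[C]_(2 ^ n)) : C :=
  sqrtC (\tr (adj M *m M) / (2 ^ n)%:R).

Definition expI {n : nat} (M : 'M[C]_(2 ^ n * 2 ^ n)) : C :=
  (adj (sigmaI n) *m M *m sigmaI n) 0 0.

Definition Hgt {n : nat} (k : nat) (alpha : pstring n -> C) : 'M[C]_(2 ^ n) :=
  \sum_(P : pstring n | (k < weight P)%N) alpha P *: pauli P.

End Qubits.

(* Main.v *)
Require Import Defs.
From HB Require Import structures.
From mathcomp Require Import all_boot all_order all_algebra.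
From mathcomp.real_closed Require Import mxtens.
From mathcomp Require Import ring lra zify.
Import Order.TTheory GRing.Theory Num.Theory.
Local Open Scope ring_scope.

Lemma sum_double (R : nmodType) (m : nat) (h : nat -> R) :
  \sum_(0 <= x < 2 * m) h x = \sum_(0 <= x < m) (h (x * 2)%N + h (x * 2).+1).
Proof.
elim: m => [|m IH]; first by rewrite !big_geq.
rewrite mulnS add2n big_nat_recr // big_nat_recr // IH big_nat_recr //= addrA.
by rewrite mulnC.
Qed.

Lemma bit_half (x b q : nat) (hb : (b < 2)%N) :
  ((x * 2 + b) %/ 2 ^ q.+1 = x %/ 2 ^ q)%N.
Proof.
by rewrite expnS divnMA divnMDl // (divn_small hb) addn0.
Qed.

Lemma sum_prod_bits (R : comPzSemiRingType) (n : nat) (F : 'I_n -> bool -> R) :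
  \sum_(x < 2 ^ n) \prod_(q < n) F q (bit x q) =
  \prod_(q < n) (F q false + F q true).
Proof.
elim: n F => [|n IH] F.
  by rewrite expn0 big_ord1 !big_ord0.
rewrite big_ord_recl -(IH (fun q b => F (lift ord0 q) b)) /bit.
rewrite -(big_mkord xpredT (fun x => \prod_(q < n.+1) F q (odd (x %/ 2 ^ q)))).
rewrite -(big_mkord xpredT (fun x => \prod_(q < n) F (lift ord0 q) (odd (x %/ 2 ^ q)))).
rewrite expnS sum_double.
rewrite big_distrr /=; apply: eq_bigr => x _.
rewrite !big_ord_recl /= !expn0 !divn1 mulrDl.
have -> : odd (x * 2) = false by rewrite oddM andbF.
have -> : odd (x * 2).+1 = true by rewrite /= oddM andbF.
congr (_ * _ + _ * _); apply: eq_bigr => q _; congr F; congr odd.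
  by rewrite /bump /= add1n -{1}(addn0 (x * 2)%N) bit_half.
by rewrite /bump /= add1n -addn1 bit_half.
Qed.
Lemma bits_inj (n x y : nat) : (x < 2 ^ n)%N -> (y < 2 ^ n)%N ->
  (forall q, (q < n)%N -> odd (x %/ 2 ^ q) = odd (y %/ 2 ^ q)) -> x = y.
Proof.
elim: n x y => [|n IH] x y.
  by rewrite expn0 !ltnS !leqn0 => /eqP -> /eqP ->.
move=> hx hy hb.
have h0 := hb 0%N isT; rewrite expn0 !divn1 in h0.
have h1 : (x %/ 2 = y %/ 2)%N.
  apply: IH; rewrite ?ltn_divLR // -?expnSr //.
  move=> q hq; have := hb q.+1 hq.
  by rewrite expnS !divnMA.
by rewrite (divn_eq x 2) (divn_eq y 2) h1 !modn2 h0.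
Qed.

Section P1.
Variable C : numClosedFieldType.

Lemma pauli1_conj (a : 'I_4) b c : (pauli1 C a b c)^* = pauli1 C a c b.
Proof.
case: a => [[|[|[|[|a]]]] Ha] //; rewrite /pauli1 /=;
  case: b; case: c => /=; rewrite ?conjC0 ?conjC1 ?conjCN1 ?conjCi ?opprK // -?[(- _)^*]/(_ ^* \o GRing.opp)/= ?rmorphN /= ?conjCi ?opprK //.
Qed.

Lemma conjCNi : (- 'i : C)^* = 'i.
Proof. by rewrite -mulN1r rmorphM /= conjCN1 conjCi mulN1r opprK. Qed.

Lemma pauli1_ortho (a a' : 'I_4) : val a != val a' ->
  \sum_(c : bool) \sum_(b : bool) (pauli1 C a b c)^* * pauli1 C a' b c = 0.
Proof.
rewrite !big_bool /=.
case: a => [[|[|[|[|a]]]] Ha] //; case: a' => [[|[|[|[|a']]]] Ha'] //=;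
  rewrite /pauli1 /= ?conjC0 ?conjC1 ?conjCN1 ?conjCNi ?conjCi => _; ring.
Qed.

Lemma adjE m p (M : 'M[C]_(m, p)) i j : adj M i j = (M j i)^*.
Proof. by rewrite /adj !mxE. Qed.

Lemma adj_pauli n (P : pstring n) : adj (pauli C P) = pauli C P.
Proof.
apply/matrixP => x y; rewrite adjE !mxE rmorph_prod /=.
by apply: eq_bigr => q _; rewrite pauli1_conj.
Qed.

Lemma pauli_pid n : pauli C (pid n) = 1%:M.
Proof.
apply/matrixP => x y; rewrite !mxE.
have E : forall q : 'I_n, pauli1 C (pid n q) (bit x q) (bit y q) = (bit x q == bit y q)%:R.
  by move=> q; rewrite /pid ffunE.
under eq_bigr => q _ do rewrite E.
case: eqP => [->|ne].
  by rewrite big1 // => q _; rewrite eqxx.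
have [q hq] : exists q : 'I_n, bit x q != bit y q.
  apply/existsP; apply: contraT; rewrite negb_exists => /forallP H.
  case: ne; apply: val_inj; apply: (@bits_inj n) => //=.
  move=> q hq; have := H (Ordinal hq); rewrite negbK => /eqP.
  by rewrite /bit.
by rewrite (bigD1 q) //= (negbTE hq) mul0r.
Qed.

Lemma weight_pid n : weight (pid n) = 0%N.
Proof.
rewrite /weight; apply/eqP; rewrite cards_eq0; apply/eqP/setP => q.
by rewrite !inE /pid ffunE eqxx.
Qed.

Lemma pauli_ortho n (P Q : pstring n) : P != Q ->
  \tr (adj (pauli C P) *m pauli C Q) = 0.
Proof.
move=> nPQ.
have [q0 hq0] : exists q0, P q0 != Q q0.
  apply/existsP; apply: contraR nPQ; rewrite negb_exists => /forallP H.
  by apply/eqP/ffunP => q; have := H q; rewrite negbK => /eqP.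
pose G (q : 'I_n) (c b : bool) := (pauli1 C (P q) b c)^* * pauli1 C (Q q) b c.
transitivity (\sum_(x < 2 ^ n) \sum_(y < 2 ^ n) \prod_(q < n) G q (bit x q) (bit y q)).
  rewrite /mxtrace; apply: eq_bigr => x _; rewrite !mxE; apply: eq_bigr => y _.
  by rewrite adjE !mxE rmorph_prod -big_split.
transitivity (\sum_(x < 2 ^ n) \prod_(q < n) (G q (bit x q) false + G q (bit x q) true)).
  apply: eq_bigr => x _.
  exact: (@sum_prod_bits C n (fun q b => G q (bit x q) b)).
rewrite (@sum_prod_bits C n (fun q c => G q c false + G q c true)).
rewrite (bigD1 q0) //=.
have E : G q0 false false + G q0 false true + (G q0 true false + G q0 true true) = 0.
  rewrite -(@pauli1_ortho (P q0) (Q q0)) ?val_eqE // !big_bool /G /=.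
  by rewrite addrC [X in _ + X]addrC [X in X + _]addrC.
by rewrite E mul0r.
Qed.
End P1.

Section Hilb.
Variable C : numClosedFieldType.

Definition ip {m} (u v : 'cV[C]_m) : C := \sum_i (u i 0)^* * v i 0.

Lemma ipE m (u v : 'cV[C]_m) : (adj u *m v) 0 0 = ip u v.
Proof. by rewrite !mxE; apply: eq_bigr => i _; rewrite adjE. Qed.

Lemma adjK m p (M : 'M[C]_(m, p)) : adj (adj M) = M.
Proof. by apply/matrixP => i j; rewrite !adjE conjCK. Qed.

Lemma adj_mul m p r (A : 'M[C]_(m, p)) (B : 'M[C]_(p, r)) :
  adj (A *m B) = adj B *m adj A.
Proof.
apply/matrixP => i j; rewrite adjE !mxE rmorph_sum /=; apply: eq_bigr => k _.
by rewrite !adjE rmorphM mulrC.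
Qed.

Lemma adjD m p (A B : 'M[C]_(m, p)) : adj (A + B) = adj A + adj B.
Proof. by apply/matrixP => i j; rewrite !(adjE, mxE) rmorphD. Qed.

Lemma adjZ m p a (A : 'M[C]_(m, p)) : adj (a *: A) = a^* *: adj A.
Proof. by apply/matrixP => i j; rewrite !(adjE, mxE) rmorphM. Qed.

Lemma ip_adj m (M : 'M[C]_m) (u v : 'cV[C]_m) : ip (M *m u) v = ip u (adj M *m v).
Proof. by rewrite -!ipE adj_mul mulmxA. Qed.

Lemma ipC m (u v : 'cV[C]_m) : ip v u = (ip u v)^*.
Proof.
rewrite /ip rmorph_sum; apply: eq_bigr => i _.
by rewrite rmorphM /= conjCK mulrC.
Qed.

Lemma ipDr m (u v w : 'cV[C]_m) : ip u (v + w) = ip u v + ip u w.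
Proof. by rewrite /ip -big_split; apply: eq_bigr => i _; rewrite !mxE mulrDr. Qed.

Lemma ipDl m (u v w : 'cV[C]_m) : ip (v + w) u = ip v u + ip w u.
Proof. by rewrite /ip -big_split; apply: eq_bigr => i _; rewrite !mxE rmorphD mulrDl. Qed.

Lemma ipZr m a (u v : 'cV[C]_m) : ip u (a *: v) = a * ip u v.
Proof. by rewrite /ip mulr_sumr; apply: eq_bigr => i _; rewrite !mxE mulrCA. Qed.

Lemma ipZl m a (u v : 'cV[C]_m) : ip (a *: u) v = a^* * ip u v.
Proof. by rewrite /ip mulr_sumr; apply: eq_bigr => i _; rewrite !mxE rmorphM mulrA. Qed.

Lemma ipNl m (u v : 'cV[C]_m) : ip (- u) v = - ip u v.
Proof. by rewrite -scaleN1r ipZl conjCN1 mulN1r. Qed.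

Lemma ipNr m (u v : 'cV[C]_m) : ip u (- v) = - ip u v.
Proof. by rewrite -scaleN1r ipZr mulN1r. Qed.

Lemma ip_ge0 m (u : 'cV[C]_m) : 0 <= ip u u.
Proof. by apply: sumr_ge0 => i _; rewrite -normCKC exprn_ge0. Qed.

Lemma ip_real m (u : 'cV[C]_m) : (ip u u)^* = ip u u.
Proof. exact/geC0_conj/ip_ge0. Qed.

Lemma ip_eq0 m (u : 'cV[C]_m) : ip u u = 0 -> u = 0.
Proof.
move=> /eqP; rewrite psumr_eq0 => [/allP H|i _]; last by rewrite -normCKC exprn_ge0.
apply/matrixP => i j; rewrite [j]ord1 mxE.
have := H i (mem_index_enum i); rewrite -normCKC sqrf_eq0 normr_eq0.
by move/eqP.
Qed.

Lemma CS m (u w : 'cV[C]_m) : `|ip u w| ^+ 2 <= ip u u * ip w w.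
Proof.
set a := ip w w; set b := ip w u.
have a0 : 0 <= a by apply: ip_ge0.
have ar : a^* = a by apply: ip_real.
have uw : ip u w = b^* by rewrite ipC.
case: (eqVneq a 0) => [a0'|anz].
  have -> : w = 0 by apply: ip_eq0.
  have ip0 : forall (x : 'cV[C]_m), ip x 0 = 0.
    by move=> x; rewrite /ip big1 // => i _; rewrite mxE mulr0.
  by rewrite !ip0 normr0 expr0n a0' mulr0.
have ap : 0 < a by rewrite lt_def anz a0.
have := @ip_ge0 _ (a *: u - b *: w).
rewrite ipDl !ipDr !ipNl !ipNr !ipZl !ipZr ar uw -/a -/b.
have -> : a * (a * ip u u) - a * (b * b^*) + (- (b^* * (a * b)) - - (b^* * (b * a)))
   = a * (a * ip u u - b * b^*) by ring.
rewrite pmulr_rge0 // subr_ge0 => H.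
by rewrite normCK conjCK mulrC [_ * a]mulrC.
Qed.

Lemma sum_delta (T : finType) (i : T) (F : T -> C) : \sum_j (i == j)%:R * F j = F i.
Proof.
rewrite (bigD1 i) //= eqxx mul1r big1 ?addr0 // => j.
by rewrite eq_sym => /negbTE ->; rewrite mul0r.
Qed.

Lemma sum_tens m p (F : 'I_(m * p) -> C) :
  \sum_k F k = \sum_i \sum_j F (mxtens_index (i, j)).
Proof.
rewrite (reindex (@mxtens_index m p)) /=; last first.
  by exists (@mxtens_unindex m p) => x _; [apply: mxtens_indexK | apply: mxtens_unindexK].
by rewrite pair_big /=; apply: eq_bigr => [[i j]].
Qed.

Variable n : nat.
Definition cst : C := (sqrtC (2 ^ n)%:R)^-1.

Lemma cst2 : cst^* * cst = ((2 ^ n)%:R)^-1.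
Proof.
have c0 : 0 <= cst by rewrite invr_ge0 sqrtC_ge0 ler0n.
by rewrite geC0_conj // -expr2 exprVn sqrtCK.
Qed.

Lemma sigmaI_entry i j : sigmaI C n (mxtens_index (i, j)) 0 = cst * (i == j)%:R.
Proof.
have -> : (0 : 'I_1) = mxtens_index ((0 : 'I_1), (0 : 'I_1)) :> 'I_(1 * 1) by apply: val_inj.
rewrite /sigmaI mxE summxE; congr (_ * _).
under eq_bigr => x _ do rewrite tensmxE !mxE !eqxx !andbT.
by rewrite (@sum_delta _ i (fun x => (j == x)%:R)) eq_sym.
Qed.

Definition sv (M : 'M[C]_(2 ^ n)) : 'cV[C]_(2 ^ n * 2 ^ n) := (1%:M *t M) *m sigmaI C n.

Lemma sv_entry M i j : sv M (mxtens_index (i, j)) 0 = cst * M j i.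
Proof.
rewrite /sv mxE sum_tens.
under eq_bigr => i' _ do under eq_bigr => j' _ do rewrite tensmxE sigmaI_entry mxE -mulrA.
under eq_bigr => i' _ do rewrite -mulr_sumr.
rewrite sum_delta.
under eq_bigr => j' _ do rewrite mulrCA mulrC.
rewrite [RHS]mulrC -(@sum_delta _ i (fun j0 => M j j0 * cst)); apply: eq_bigr => x _.
by rewrite mulrAC mulrC.
Qed.

Lemma ip_sv (M M' : 'M[C]_(2 ^ n)) :
  ip (sv M) (sv M') = ((2 ^ n)%:R)^-1 * \tr (adj M *m M').
Proof.
rewrite /ip sum_tens -cst2 /mxtrace mulr_sumr; apply: eq_bigr => i _.
rewrite mxE mulr_sumr; apply: eq_bigr => j _.
by rewrite !sv_entry adjE rmorphM; ring.
Qed.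

Lemma sv_lin (I : finType) (p : pred I) (a : I -> C) (Ms : I -> 'M[C]_(2 ^ n)) :
  sv (\sum_(P | p P) a P *: Ms P) = \sum_(P | p P) a P *: sv (Ms P).
Proof.
apply/matrixP => k z; rewrite [z]ord1; case: (mxtens_indexP k) => i j.
rewrite sv_entry !summxE mulr_sumr; apply: eq_bigr => P _.
by rewrite [RHS]mxE [in LHS]mxE sv_entry mulrCA.
Qed.

Lemma sv1 : sv 1%:M = sigmaI C n.
Proof.
apply/matrixP => k z; rewrite [z]ord1; case: (mxtens_indexP k) => i j.
by rewrite sv_entry sigmaI_entry mxE eq_sym.
Qed.

Lemma adj_tens1 (H : 'M[C]_(2 ^ n)) :
  adj ((1%:M : 'M[C]_(2 ^ n)) *t H) = (1%:M : 'M[C]_(2 ^ n)) *t adj H.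
Proof.
apply/matrixP => k l.
case: (mxtens_indexP k) => i j; case: (mxtens_indexP l) => i' j'.
by rewrite adjE !tensmxE adjE !mxE rmorphM /= conjC_nat eq_sym.
Qed.

Lemma U_contract (H : 'M[C]_(2 ^ n)) : specnorm_le1 H ->
  forall x, ip (((1%:M : 'M[C]_(2 ^ n)) *t H) *m x) (((1%:M : 'M[C]_(2 ^ n)) *t H) *m x)
            <= ip x x.
Proof.
move=> hH x.
pose w (i : 'I_(2 ^ n)) : 'cV[C]_(2 ^ n) := \col_l x (mxtens_index (i, l)) 0.
have E : forall i j, (((1%:M : 'M[C]_(2 ^ n)) *t H) *m x) (mxtens_index (i, j)) 0
                     = (H *m w i) j 0.
  move=> i j; rewrite mxE sum_tens.
  under eq_bigr => i' _ do under eq_bigr => j' _ do rewrite tensmxE mxE -mulrA.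
  under eq_bigr => i' _ do rewrite -mulr_sumr.
  rewrite (@sum_delta _ i (fun i' => \sum_j' H j j' * x (mxtens_index (i', j')) 0)).
  by rewrite mxE; apply: eq_bigr => l _; rewrite mxE.
have -> : ip x x = \sum_i ip (w i) (w i).
  by rewrite /ip sum_tens; apply: eq_bigr => i _; apply: eq_bigr => j _; rewrite !mxE.
rewrite /ip sum_tens; apply: ler_sum => i _.
have := hH (w i); rewrite /vnorm2 !ipE /ip.
by move=> h; under eq_bigr => j _ do rewrite E.
Qed.

Lemma adj_sum (I : finType) (p : pred I) m q (F : I -> 'M[C]_(m, q)) :
  adj (\sum_(i | p i) F i) = \sum_(i | p i) adj (F i).
Proof.
apply/matrixP => i j; rewrite adjE !summxE rmorph_sum; apply: eq_bigr => x _.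
by rewrite adjE.
Qed.

Lemma tr_sum (I : finType) (p : pred I) m q (F : I -> 'M[C]_(m, q)) :
  (\sum_(i | p i) F i)^T = \sum_(i | p i) (F i)^T.
Proof.
by apply/matrixP => i j; rewrite !mxE !summxE; apply: eq_bigr => x _; rewrite mxE.
Qed.

Lemma proj_contract m (Pi : 'M[C]_m) : adj Pi = Pi -> Pi *m Pi = Pi ->
  forall x, ip (Pi *m x) (Pi *m x) <= ip x x.
Proof.
move=> hA hI x; set y : 'cV[C]_m := x - Pi *m x.
have hy : ip (Pi *m x) y = 0.
  by rewrite ip_adj hA /y mulmxBr mulmxA hI subrr /ip big1 // => i _; rewrite mxE mulr0.
have ex : x = Pi *m x + y by rewrite /y addrC subrK.
clearbody y.
have -> : ip x x = ip (Pi *m x + y) (Pi *m x + y) by rewrite -ex.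
rewrite [in X in _ <= X]ipDl !ipDr hy (ipC _ (Pi *m x) y) hy conjC0 add0r addr0 lerDl.
exact: ip_ge0.
Qed.
Variables (k : nat) (Pi : 'M[C]_(2 ^ n * 2 ^ n)).
Hypothesis hP : is_proj_D k Pi.

Lemma sigmaP_sv (P : pstring n) : sigmaP C P = sv (pauli C P).
Proof. by []. Qed.

Lemma Pi_in (P : pstring n) : inD k P -> Pi *m sigmaP C P = sigmaP C P.
Proof.
case: hP => hA hI /andP [_ hD] hin.
have : ((sigmaP C P)^T <= Pi^T)%MS.
  apply: submx_trans hD; apply: (sumsmx_sup P) => //.
  by rewrite genmxE.
case/submxP => D hD'.
have -> : sigmaP C P = Pi *m D^T by rewrite -(trmxK (sigmaP C P)) hD' trmx_mul trmxK.
by rewrite mulmxA hI.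
Qed.

Lemma Pi_out (P : pstring n) : ~~ inD k P -> Pi *m sigmaP C P = 0.
Proof.
case: hP => hA hI /andP [hD _] hout.
case/sub_sumsmxP: hD => u hu.
pose X Q := u Q *m <<(sigmaP C Q)^T>>%MS *m pinvmx (sigmaP C Q)^T.
have hu' : Pi^T = \sum_(Q | inD k Q) X Q *m (sigmaP C Q)^T.
  rewrite hu; apply: eq_bigr => Q _; rewrite /X mulmxKpV //.
  by apply: submx_trans (submxMl _ _) _; rewrite genmxE.
have -> : Pi = \sum_(Q | inD k Q) adj ((X Q)^T) *m adj (sigmaP C Q).
  rewrite -{1}hA -(trmxK Pi) hu' tr_sum adj_sum; apply: eq_bigr => Q _.
  by rewrite trmx_mul trmxK adj_mul.
rewrite mulmx_suml big1 // => Q hQ.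
rewrite -mulmxA.
have -> : adj (sigmaP C Q) *m sigmaP C P = 0.
  apply/matrixP => i j; rewrite [i]ord1 [j]ord1 ipE !sigmaP_sv ip_sv mxE.
  rewrite pauli_ortho ?mulr0 //.
  by apply: contraNneq hout => <-.
by rewrite mulmx0.
Qed.

Lemma mxpowSr m (A : 'M[C]_m) l : mxpow A l.+1 = mxpow A l *m A.
Proof.
elim: l => [|l IH]; first by rewrite /= mulmx1 mul1mx.
change (A *m mxpow A l.+1 = (A *m mxpow A l) *m A); by rewrite IH mulmxA.
Qed.

Lemma expI_ip (M : 'M[C]_(2 ^ n * 2 ^ n)) : expI M = ip (sigmaI C n) (M *m sigmaI C n).
Proof. by rewrite /expI -mulmxA ipE. Qed.

Lemma main (alpha : pstring n -> C) (H : 'M[C]_(2 ^ n)) :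
  (forall P, alpha P \is Num.real) ->
  H = \sum_(P : pstring n) alpha P *: pauli C P ->
  specnorm_le1 H ->
  \tr H = 0 ->
  let A := Pi *m ((1%:M : 'M[C]_(2 ^ n)) *t H) *m Pi in
  forall l : nat, (2 <= l)%N ->
    `|expI (mxpow A l)| <= expI (mxpow A 2) /\
    expI (mxpow A 2) = norm2 (Hgt k alpha) ^+ 2.
Proof.
move=> hr hH hn ht A l hl.
have [hA hI _] := hP.
set U := (1%:M : 'M[C]_(2 ^ n)) *t H.
set s := sigmaI C n.
have adjH : adj H = H.
  rewrite hH adj_sum; apply: eq_bigr => P _.
  by rewrite adjZ conj_Creal // adj_pauli.
have adjU : adj U = U by rewrite /U adj_tens1 adjH.
have adjA : adj A = A by rewrite /A !adj_mul adjU hA mulmxA.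
have Ps : Pi *m s = s.
  have := @Pi_in (pid n); rewrite sigmaP_sv pauli_pid sv1; apply.
  by rewrite /inD eqxx.
have a0 : alpha (pid n) = 0.
  move: ht; rewrite hH raddf_sum (bigD1 (pid n)) //= big1 => [|P hP'].
    rewrite addr0 mxtraceZ pauli_pid mxtrace1 => /eqP.
    by rewrite mulf_eq0 pnatr_eq0 expn_eq0 /= orbF => /eqP.
  rewrite mxtraceZ.
  have -> : \tr (pauli C P) = \tr (adj (pauli C (pid n)) *m pauli C P).
    by rewrite adj_pauli pauli_pid mul1mx.
  by rewrite pauli_ortho ?mulr0 // eq_sym.
have As : A *m s = sv (Hgt k alpha).
  rewrite /A -mulmxA Ps -mulmxA.
  have -> : U *m s = sv H by [].
  rewrite hH sv_lin mulmx_sumr /Hgt sv_lin.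
  rewrite [RHS]big_mkcond /=; apply: eq_bigr => P _; rewrite -scalemxAr.
  case: (eqVneq P (pid n)) => [->|nP].
    by rewrite a0 !scale0r weight_pid /= ?scaler0 ?mulmx0.
  have E : inD k P = (k < weight P)%N by rewrite /inD (negbTE nP).
  case: ifP => hw.
    by rewrite -sigmaP_sv Pi_in // E.
  by rewrite -sigmaP_sv Pi_out ?scaler0 // E hw.
set v := sv (Hgt k alpha).
have key : forall m, expI (mxpow A m.+2) = ip v (mxpow A m *m v).
  move=> m; rewrite expI_ip; change (ip s ((A *m mxpow A m.+1) *m s) = ip v (mxpow A m *m v)).
  rewrite mxpowSr -[(A *m (mxpow A m *m A)) *m s]mulmxA -[(mxpow A m *m A) *m s]mulmxA As -/v.
  by rewrite -{1}adjA -ip_adj As.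
have Acontr : forall x, ip (A *m x) (A *m x) <= ip x x.
  move=> x; rewrite /A -!mulmxA.
  apply: le_trans (proj_contract _ _ hA hI _) _.
  apply: le_trans (U_contract _ hn _) _.
  exact: proj_contract.
have Bcontr : forall m x, ip (mxpow A m *m x) (mxpow A m *m x) <= ip x x.
  elim => [|m IH] x; first by rewrite /= mul1mx.
  by rewrite /= -mulmxA; apply: le_trans (Acontr _) (IH x).
have E2 : expI (mxpow A 2) = ip v v by rewrite key /= mul1mx.
split; last first.
  rewrite E2 /v ip_sv /norm2 sqrtCK mulrC //.
case: l hl => [|[|m]] // _.
rewrite E2 key.
have v0 : 0 <= ip v v by apply: ip_ge0.
rewrite -(@ler_pXn2r _ 2) // ?inE ?normr_ge0 //.
apply: le_trans (CS _ _ _) _.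
  rewrite expr2; apply: ler_wpM2l => //; exact: Bcontr.
all: by rewrite nnegrE ?normr_ge0.
Qed.
End Hilb.

Theorem lemma4p10 (C : numClosedFieldType) (n k : nat)
    (alpha : pstring n -> C) (H : 'M[C]_(2 ^ n)) (Pi : 'M[C]_(2 ^ n * 2 ^ n)) :
  (forall P, alpha P \is Num.real) ->
  H = \sum_(P : pstring n) alpha P *: pauli C P ->
  specnorm_le1 H ->
  \tr H = 0 ->
  is_proj_D k Pi ->
  let A := Pi *m ((1%:M : 'M[C]_(2 ^ n)) *t H) *m Pi in
  forall l : nat, (2 <= l)%N ->
    `|expI (mxpow A l)| <= expI (mxpow A 2) /\
    expI (mxpow A 2) = norm2 (Hgt k alpha) ^+ 2.
Proof.
move=> hr hH hn ht hP.
exact: (@main C n k Pi hP alpha H hr hH hn ht).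
Qed.
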